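(* Let $N\in\mathbb{Z}$ and let $(a_n)_{n\le N}$ be elements of $\mathbb{C}_p$ with $a_n\to0$ as $n\to-\infty$. If the function $\sum_{n=-\infty}^N a_n(\mathbf x-\mathbf 1)^{\star n}$ (a uniformly convergent series in $C(\mathbb{Z}_p,\mathbb{C}_p)$) is identically zero, then $a_n=0$ for all $n\le N$. Consequently every function of the form $\sum_{n=-\infty}^N a_n(\mathbf x-\mathbf 1)^{\star n}$ determines its coefficients $a_n$ uniquely.
   Context: Fix a prime $p$. $\mathbb{C}_p$ denotes the completion of an algebraic closure of $\mathbb{Q}_p$, with absolute value $|\cdot|$ normalized by $|p|=1/p$. $C(\mathbb{Z}_p,\mathbb{C}_p)$ is the $\mathbb{C}_p$-Banach space of continuous functions $\mathbb{Z}_p\to\mathbb{C}_p$ with the sup-norm $\|\cdot\|$. For $n\in\mathbb{Z}_{\ge0}$ and $x\in\mathbb{Z}_p$, $\binom{x}{n}=x(x-1)\cdots(x-n+1)/n!$. For $y\in\mathbb{Z}_p$ and $\phi\in C(\mathbb{Z}_p,\mathbb{C}_p)$, $S^y(\phi)(x)=\sum_{k\ge0}(-1)^k k!\binom yk\binom xk\phi(x-k)$; each $S^y$ is norm-preserving. $\mathbf 1$ is the constant function $1$, $\mathbf x$ is $x\mapsto x$, and for $n\in\mathbb{Z}$, $(\mathbf x-\mathbf 1)^{\star n}:=(-1)^nS^n(\mathbf 1)$ (these have sup-norm $1$). *)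

(* Defs.v *)
From HB Require Import structures.
From mathcomp Require Import all_boot all_order all_algebra.
From mathcomp Require Import reals.
From Stdlib Require Import ClassicalEpsilon.
Set Implicit Arguments. Unset Strict Implicit. Unset Printing Implicit Defensive.
Import Order.TTheory GRing.Theory Num.Theory.
Local Open Scope ring_scope.

Section Defs.
Variables (R : realType) (K : fieldType) (abs : K -> R).

Definition nonarch_abs : Prop :=
  [/\ forall x, 0 <= abs x,
      forall x, abs x = 0 -> x = 0,
      abs 0 = 0,
      forall x y, abs (x * y) = abs x * abs y
    & forall x y, abs (x + y) <= Num.max (abs x) (abs y)].

Definition abs_complete : Prop :=
  forall u : nat -> K,
    (forall eps, 0 < eps -> exists M : nat, forall m n : nat,
        (M <= m)%N -> (M <= n)%N -> abs (u m - u n) < eps) ->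
    exists l, forall eps, 0 < eps -> exists M : nat, forall m : nat,
        (M <= m)%N -> abs (u m - l) < eps.

Definition alg_closed_field : Prop :=
  forall q : {poly K}, (1 < size q)%N -> exists x, root q x.

Definition algebraic_over_Q (x : K) : Prop :=
  exists q : {poly rat}, q != 0 /\ root (map_poly (@ratr K) q) x.

(* (K, abs) is (isometrically isomorphic to) C_p: a complete, algebraically
   closed, non-archimedean valued field with |p| = 1/p, in which the
   algebraic numbers (= an algebraic closure of Q_p, by Krasner) are dense. *)
Definition is_Cp (p : nat) : Prop :=
  [/\ nonarch_abs, abs_complete, alg_closed_field,
      abs (p%:R) = (p%:R)^-1
    & forall x eps, 0 < eps -> exists y, algebraic_over_Q y /\ abs (x - y) < eps].

Definition in_Zp (x : K) : Prop :=
  forall eps, 0 < eps -> exists n : nat, abs (x - n%:R) < eps.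

Definition series_to (u : nat -> K) (l : K) : Prop :=
  forall eps, 0 < eps -> exists M : nat, forall m : nat,
    (M <= m)%N -> abs (\sum_(k < m) u k - l) < eps.

(* the sum of a convergent series (0 if it does not converge) *)
Definition series_sum (u : nat -> K) : K :=
  epsilon (inhabits 0) (fun l => series_to u l \/ ~ (exists l', series_to u l') /\ l = 0).

Definition binomK (x : K) (k : nat) : K :=
  (\prod_(i < k) (x - i%:R)) / (k`!)%:R.

Definition Sop (y : K) (phi : K -> K) (x : K) : K :=
  series_sum (fun k => (-1) ^+ k * (k`!)%:R * binomK y k * binomK x k * phi (x - k%:R)).

Definition xm1_star (n : int) (x : K) : K :=
  (-1) ^ n * Sop (n%:~R) (fun _ => 1) x.

End Defs.

(* Main.v *)
Require Import Defs.
From HB Require Import structures.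
From mathcomp Require Import all_boot all_order all_algebra.
From mathcomp Require Import reals.
From mathcomp Require Import ring lra.
From Stdlib Require Import ClassicalEpsilon.
Import Order.TTheory GRing.Theory Num.Theory.
Set Implicit Arguments. Unset Strict Implicit.
Local Open Scope ring_scope.
Section Aux.
Variables (R : realType) (K : fieldType) (abs : K -> R).
Hypothesis Hna : nonarch_abs abs.

Lemma abs_ge0 x : 0 <= abs x. Proof. by move: Hna; rewrite /nonarch_abs => -[h _ _ _ _]; apply: h. Qed.
Lemma abs_eq0 x : abs x = 0 -> x = 0. Proof. by move: Hna; rewrite /nonarch_abs => -[_ h _ _ _]; apply: h. Qed.
Lemma abs0 : abs 0 = 0. Proof. by move: Hna; rewrite /nonarch_abs => -[_ _ h _ _]. Qed.
Lemma absM x y : abs (x * y) = abs x * abs y. Proof. by move: Hna; rewrite /nonarch_abs => -[_ _ _ h _]; apply: h. Qed.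
Lemma absD x y : abs (x + y) <= Num.max (abs x) (abs y). Proof. by move: Hna; rewrite /nonarch_abs => -[_ _ _ _ h]; apply: h. Qed.

Lemma abs1 : abs 1 = 1.
Proof.
have h : abs 1 = abs 1 * abs 1 by rewrite -absM mulr1.
have nz : abs 1 != 0 by apply/eqP => /abs_eq0/eqP; rewrite oner_eq0.
by have := mulIf nz; move=> /(_ 1 (abs 1)); rewrite mul1r => ->.
Qed.

Lemma absN1 : abs (-1) = 1.
Proof.
have h : abs (-1) * abs (-1) = 1 by rewrite -absM mulrNN mulr1 abs1.
have h0 := abs_ge0 (-1).
nra.
Qed.

Lemma absN x : abs (- x) = abs x.
Proof. by rewrite -mulN1r absM absN1 mul1r. Qed.

Lemma absB_lt x y e : abs x < e -> abs y < e -> abs (x - y) < e.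
Proof.
move=> hx hy; apply: le_lt_trans (absD _ _) _.
by rewrite gt_max hx absN hy.
Qed.

Lemma absD_lt x y e : abs x < e -> abs y < e -> abs (x + y) < e.
Proof. by move=> hx hy; rewrite -[y]opprK; apply: absB_lt; rewrite ?absN. Qed.

Lemma abs_natr n : abs (n%:R) <= 1.
Proof.
elim: n => [|n IH]; first by rewrite abs0 ler01.
rewrite -addn1 natrD; apply: le_trans (absD _ _) _.
by rewrite ge_max IH abs1 lexx.
Qed.

Lemma abs_sum_lt (I : Type) (s : seq I) (P : pred I) (F : I -> K) e :
  0 < e -> (forall i, P i -> abs (F i) < e) -> abs (\sum_(i <- s | P i) F i) < e.
Proof.
move=> e0 h; elim: s => [|x s IH]; first by rewrite big_nil abs0.
rewrite big_cons; case: ifP => // Px; exact: absD_lt (h _ Px) IH.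
Qed.

Lemma abs_small_eq0 x : (forall e, 0 < e -> abs x < e) -> x = 0.
Proof.
move=> h; apply: abs_eq0; have := abs_ge0 x; rewrite le_eqVlt => /orP[/eqP<-//|].
by move=> /h; rewrite ltxx.
Qed.

End Aux.

Section Aux2.
Variables (R : realType) (K : fieldType) (abs : K -> R).
Hypothesis Hna : nonarch_abs abs.

Lemma natr_neq0 p : prime p -> abs p%:R = (p%:R)^-1 -> forall n, (0 < n)%N -> n%:R != 0 :> K.
Proof.
move=> pp hp n n0; apply/negP => /(natf0_pchar n0) [q qc].
have qpr : prime q := pcharf_prime qc.
have q0 : q%:R = 0 :> K := pcharf0 qc.
have p1 : (1 < p)%N := prime_gt1 pp.
have pR : (1 : R) < p%:R by rewrite ltr1n.
have pinv : (p%:R : R)^-1 < 1 by rewrite invf_lt1 // (lt_trans ltr01 pR).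
case: (eqVneq q p) => [eqp|nqp].
  move: hp; rewrite -eqp q0 (abs0 Hna) => /eqP; rewrite eq_sym invr_eq0 pnatr_eq0.
  by rewrite eqp; case: p p1 {pp pR pinv eqp} => [|p'].
have cop : coprime q p by rewrite prime_coprime // dvdn_prime2 //.
have [a _ hd] := Bezoutl p (prime_gt0 qpr).
move: hd; rewrite (eqP cop) => /dvdnP [c hc].
have : (1 + a * p)%:R = 0 :> K by rewrite hc natrM q0 mulr0.
rewrite natrD mulr1n natrM => /eqP; rewrite addr_eq0 => /eqP h1.
have := abs1 Hna; rewrite h1 (absN Hna) (absM Hna) hp => e.
have ha := abs_natr Hna a.
have : abs (a%:R : K) * (p%:R)^-1 < 1.
  apply: (le_lt_trans _ pinv); rewrite -[X in _ <= X]mul1r ler_wpM2r //.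
  by rewrite invr_ge0 ler0n.
by rewrite e ltxx.
Qed.

End Aux2.

Section Ser.
Variables (R : realType) (K : fieldType) (abs : K -> R).
Hypothesis Hna : nonarch_abs abs.

Lemma series_to_unique u l1 l2 : series_to abs u l1 -> series_to abs u l2 -> l1 = l2.
Proof.
move=> h1 h2; apply/eqP; rewrite -subr_eq0; apply/eqP; apply: (abs_small_eq0 Hna) => e e0.
have [M1 hM1] := h1 e e0; have [M2 hM2] := h2 e e0.
have -> : l1 - l2 = (\sum_(k < maxn M1 M2) u k - l2) - (\sum_(k < maxn M1 M2) u k - l1) by ring.
by apply: (absB_lt Hna); [apply: hM2 | apply: hM1]; rewrite ?leq_maxl ?leq_maxr.
Qed.

Lemma series_sum_eq u l : series_to abs u l -> series_sum abs u = l.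
Proof.
move=> h; rewrite /series_sum.
have ex : exists l0, series_to abs u l0 \/ ~ (exists l', series_to abs u l') /\ l0 = 0 by exists l; left.
case: (epsilon_spec (inhabits 0) _ ex) => [h'|[hn _]]; last by exfalso; apply: hn; exists l.
exact: series_to_unique h' h.
Qed.

Lemma series_to_finite u m : (forall k, (m <= k)%N -> u k = 0) ->
  series_to abs u (\sum_(k < m) u k).
Proof.
move=> hu e e0; exists m => M hM.
rewrite -!(big_mkord xpredT) (big_cat_nat (leq0n m) hM) /=.
rewrite addrAC subrr add0r big_nat_cond big1 ?(abs0 Hna) //.
by move=> i /andP[/andP[hi _] _]; apply: hu.
Qed.

Lemma series_to0_ext u v : (forall k, u k = v k) -> series_to abs u 0 -> series_to abs v 0.
Proof.
move=> huv h e e0; have [M hM] := h e e0; exists M => m hm.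
have <- : \sum_(k < m) u k = \sum_(k < m) v k by apply: eq_bigr => i _; apply: huv.
exact: hM.
Qed.

Lemma series_to0D u v : series_to abs u 0 -> series_to abs v 0 ->
  series_to abs (fun k => u k + v k) 0.
Proof.
move=> hu hv e e0; have [M1 h1] := hu e e0; have [M2 h2] := hv e e0.
exists (maxn M1 M2) => m hm; rewrite big_split /= subr0.
move: (h1 m) (h2 m); rewrite !subr0 => h1' h2'.
apply: (absD_lt Hna); [apply: h1'|apply: h2']; apply: leq_trans hm;
  by rewrite ?leq_maxl ?leq_maxr.
Qed.

Lemma series_to0Z c u : series_to abs u 0 -> series_to abs (fun k => c * u k) 0.
Proof.
move=> hu e e0; case: (eqVneq c 0) => [->|cn0].
  by exists 0%N => m _; rewrite big1 ?subrr ?(abs0 Hna) // => i _; rewrite mul0r.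
have ac : 0 < abs c.
  by rewrite lt_def (abs_ge0 Hna) andbT; apply/eqP => /(abs_eq0 Hna); apply/eqP.
have [M hM] := hu (e / abs c) (divr_gt0 e0 ac); exists M => m hm.
have := hM m hm; rewrite !subr0 -mulr_sumr (absM Hna) => h.
by rewrite mulrC -ltr_pdivlMr.
Qed.

Lemma series_to0_sum n (F : 'I_n -> nat -> K) :
  (forall i, series_to abs (F i) 0) -> series_to abs (fun k => \sum_(i < n) F i k) 0.
Proof.
elim: n F => [|n IH] F hF.
  apply: (@series_to0_ext (fun _ => 0)); first by move=> k; rewrite big_ord0.
  by move=> e e0; exists 0%N => m _; rewrite big1 ?subrr ?(abs0 Hna).
apply: series_to0_ext; first by move=> k; rewrite big_ord_recr /=.
apply: series_to0D; last exact: hF.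
exact: (IH (fun i => F (widen_ord (leqnSn n) i))).
Qed.

End Ser.

Section Main.
Variables (R : realType) (K : fieldType) (abs : K -> R).
Hypothesis Hna : nonarch_abs abs.
Hypothesis hchar : forall n, (0 < n)%N -> n%:R != 0 :> K.

Definition Fy k (y : K) := \prod_(i < k) (y - i%:R).

Lemma fact_neq0 k : k`!%:R != 0 :> K.
Proof. exact: hchar (fact_gt0 k). Qed.

Lemma binomK_big m k : (m < k)%N -> binomK m%:R k = 0 :> K.
Proof.
move=> mk; rewrite /binomK; apply/eqP; rewrite mulf_eq0; apply/orP; left.
by apply/prodf_eq0; exists (Ordinal mk) => //=; rewrite subrr.
Qed.

Lemma Fy_nat_neq0 m : Fy m m%:R != 0.
Proof.
apply/prodf_neq0 => i _; rewrite -natrB; last exact: ltnW.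
by apply: hchar; rewrite subn_gt0.
Qed.

Lemma Sop_nat y m : Sop abs y (fun _ => 1) m%:R =
  \sum_(k < m.+1) ((-1)^+k * binomK m%:R k) * Fy k y.
Proof.
rewrite /Sop (series_sum_eq Hna (series_to_finite Hna (m := m.+1) _)).
  apply: eq_bigr => k _; rewrite /binomK /Fy mulr1.
  have := fact_neq0 k; set f := (k`!)%:R; set P := \prod_(i < k) (y - i%:R) => hf.
  by field.
by move=> k hk; rewrite binomK_big // mulr0 mul0r.
Qed.

Lemma abs_expn x n : abs (x ^+ n) = abs x ^+ n.
Proof.
elim: n => [|n IH]; first by rewrite !expr0 (abs1 Hna).
by rewrite !exprS (absM Hna) IH.
Qed.

Lemma abs_sign (z : int) : abs ((-1) ^ z) = 1.
Proof.
case: z => n /=.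
  by rewrite abs_expn (absN1 Hna) expr1n.
have h1 : abs ((-1) ^+ n.+1 : K) = 1 by rewrite abs_expn (absN1 Hna) expr1n.
have nz : ((-1) ^+ n.+1 : K) != 0 by rewrite signr_eq0.
have e : abs (((-1) ^+ n.+1)^-1 : K) = 1.
  by have := absM Hna ((-1)^+n.+1) ((-1)^+n.+1)^-1; rewrite mulfV // (abs1 Hna) h1 mul1r.
exact: e.
Qed.


Definition Fpoly k : {poly K} := \prod_(0 <= i < k) ('X - (i%:R)%:P).

Lemma Fpoly_horner k y : (Fpoly k).[y] = Fy k y.
Proof.
rewrite /Fpoly horner_prod big_mkord /Fy; apply: eq_bigr => i _.
by rewrite hornerXsubC.
Qed.

Lemma Fpoly_size k : size (Fpoly k) = k.+1.
Proof. by rewrite /Fpoly size_prod_XsubC size_iota subn0. Qed.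

Lemma Fpoly_lead k : (Fpoly k)`_k = 1.
Proof.
have := monic_prod_XsubC (index_iota 0 k) xpredT (fun i => i%:R : K).
by move/monicP; rewrite lead_coefE Fpoly_size.
Qed.

Variables (N : int) (a : int -> K).
Definition bb (t : nat) := a (N - t%:Z).
Definition sg (t : nat) : K := (-1) ^ (N - t%:Z).
Definition nn (t : nat) : K := (N - t%:Z)%:~R.
Definition good (g : nat -> K) := series_to abs (fun t => bb t * (sg t * g t)) 0.

Lemma good_ext g1 g2 : (forall t, g1 t = g2 t) -> good g1 -> good g2.
Proof. by move=> h; apply: series_to0_ext => t; rewrite h. Qed.

Lemma good_add g1 g2 : good g1 -> good g2 -> good (fun t => g1 t + g2 t).
Proof.
move=> h1 h2; apply: series_to0_ext (series_to0D Hna h1 h2) => t.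
by rewrite mulrDr mulrDr.
Qed.

Lemma good_scale c g : good g -> good (fun t => c * g t).
Proof.
move=> h; apply: series_to0_ext (series_to0Z Hna c h) => t.
by rewrite mulrCA [c * (sg t * _)]mulrCA.
Qed.

Lemma good_sum n (G : 'I_n -> nat -> K) : (forall i, good (G i)) ->
  good (fun t => \sum_(i < n) G i t).
Proof.
move=> h; apply: series_to0_ext (series_to0_sum Hna h) => t.
by rewrite mulr_sumr mulr_sumr.
Qed.

Hypothesis hzero : forall x : K, in_Zp abs x ->
  series_to abs (fun m : nat => a (N - m%:Z) * xm1_star abs (N - m%:Z) x) 0.

Lemma good_P m : good (fun t => \sum_(k < m.+1) ((-1)^+k * binomK m%:R k) * Fy k (nn t)).
Proof.
have hx : in_Zp abs (m%:R : K) by move=> e e0; exists m; rewrite subrr (abs0 Hna).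
apply: good_ext (hzero hx) => t; exact: Sop_nat.
Qed.

Lemma good_F m : good (fun t => Fy m (nn t)).
Proof.
elim/ltn_ind: m => m IH.
pose c : K := (-1)^+m * binomK m%:R m.
have cn0 : c != 0.
  rewrite mulf_neq0 ?signr_eq0 // /binomK mulf_neq0 ?invr_eq0 ?fact_neq0 //.
  exact: Fy_nat_neq0.
have hs : good (fun t => \sum_(i < m) ((-1)^+i * binomK m%:R i) * Fy i (nn t)).
  apply: good_sum => i; apply: good_scale; exact: IH.
have := good_scale c^-1 (good_add (good_P m) (good_scale (-1) hs)).
apply: good_ext => t; rewrite big_ord_recr /= -/c.
by rewrite mulN1r addrAC subrr add0r mulrA mulVf // mul1r.
Qed.

Lemma good_poly d (p : {poly K}) : (size p <= d)%N -> good (fun t => p.[nn t]).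
Proof.
elim: d p => [|d IH] p hp.
  move: hp; rewrite leqn0 size_poly_eq0 => /eqP ->.
  apply: good_ext (good_scale 0 (good_F 0)) => t; by rewrite mul0r horner0.
set c := p`_d; set p' := p - c *: Fpoly d.
have hp' : (size p' <= d)%N.
  apply/leq_sizeP => j hj; rewrite /p' coefB coefZ.
  case: (ltngtP j d) hj => //; last first.
    by move=> -> _; rewrite Fpoly_lead mulr1 subrr.
  move=> hdj _; have /leq_sizeP h1 := hp; rewrite h1 //.
  have /leq_sizeP h2 : (size (Fpoly d) <= d.+1)%N by rewrite Fpoly_size.
  by rewrite h2 // mulr0 subrr.
apply: good_ext (good_add (IH _ hp') (good_scale c (good_F d))) => t.
by rewrite /p' hornerD hornerN hornerZ Fpoly_horner addrNK.
Qed.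


Lemma prod_nat_ffact m k : (k <= m)%N -> \prod_(i < k) (m%:R - i%:R) = (m ^_ k)%:R :> K.
Proof.
move=> km; rewrite ffact_prod natr_prod; apply: eq_bigr => i _.
by rewrite natrB //; apply: leq_trans (ltnW (ltn_ord i)) km.
Qed.

Lemma prod_fact L : \prod_(i < L) (i.+1)%:R = L`!%:R :> K.
Proof.
rewrite -natr_prod fact_prod big_add1 /= big_mkord.
reflexivity.
Qed.

Definition Qf t0 L (t : nat) : K :=
  \prod_(i < t0) (t%:R - i%:R) * \prod_(i < L) (t%:R - t0%:R - 1 - i%:R).

Lemma nn_eq t : nn t = N%:~R - t%:R.
Proof. by rewrite /nn intrB. Qed.

Lemma good_Q t0 L : good (Qf t0 L).
Proof.
pose q : {poly K} := \prod_(i < t0) ((N%:~R - i%:R)%:P - 'X) *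
   \prod_(i < L) ((N%:~R - t0%:R - 1 - i%:R)%:P - 'X).
apply: good_ext (good_poly (leqnn (size q))) => t.
rewrite /q /Qf hornerM !horner_prod nn_eq; congr (_ * _); apply: eq_bigr => i _;
  rewrite hornerD hornerN hornerC hornerX; ring.
Qed.

Lemma Qf_lt t0 L t : (t < t0)%N -> Qf t0 L t = 0.
Proof.
move=> h; rewrite /Qf; apply/eqP; rewrite mulf_eq0; apply/orP; left.
by apply/prodf_eq0; exists (Ordinal h) => //=; rewrite subrr.
Qed.

Lemma natr_sub1 t t0 : (t0 < t)%N -> (t - t0.+1)%:R = t%:R - t0%:R - 1 :> K.
Proof. by move=> h; rewrite natrB // -addn1 natrD opprD addrA. Qed.

Lemma Qf_mid t0 L t : (t0 < t)%N -> (t <= t0 + L)%N -> Qf t0 L t = 0.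
Proof.
move=> h1 h2; rewrite /Qf; apply/eqP; rewrite mulf_eq0; apply/orP; right.
have hi : (t - t0.+1 < L)%N.
  by rewrite ltn_subLR // addSn ltnS.
apply/prodf_eq0; exists (Ordinal hi) => //=.
by rewrite -natr_sub1 // subrr.
Qed.

Lemma Qf_big t0 L t : (t0 + L < t)%N ->
  Qf t0 L t = ('C(t, t0) * t0`! * ('C(t - t0.+1, L) * L`!))%:R.
Proof.
move=> h; have h0 : (t0 < t)%N by apply: leq_ltn_trans h; apply: leq_addr.
rewrite /Qf !bin_ffact natrM prod_nat_ffact ?(ltnW h0) //; congr (_ * _).
rewrite -prod_nat_ffact; last by rewrite leq_subRL // addSn.
by apply: eq_bigr => i _; rewrite natr_sub1.
Qed.

Lemma Qf_t0 t0 L : Qf t0 L t0 = t0`!%:R * ((-1) ^+ L * L`!%:R).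
Proof.
rewrite /Qf prod_nat_ffact // ffactnn; congr (_ * _).
rewrite -prod_fact -[X in _ ^+ X]card_ord -prodrN; apply: eq_bigr => i _.
by rewrite subrr sub0r -opprD -natr1 addrC.
Qed.


Hypothesis ha : forall eps : R, 0 < eps -> exists M : int, forall n : int,
          n <= N -> n <= M -> abs (a n) < eps.

Lemma main_sec n : n <= N -> a n = 0.
Proof.
move=> hn; pose t0 := `|N - n|%N.
have ht0 : n = N - t0%:Z.
  by rewrite /t0 gez0_abs ?subr_ge0 // opprB addrC subrK.
rewrite ht0; apply: (abs_small_eq0 Hna) => e e0.
have [M hM] := ha e0.
pose L := `|N - M|%N.
pose d : K := (t0`!%:R * L`!%:R)^-1.
have dn0 : t0`!%:R * L`!%:R != 0 :> K by rewrite mulf_neq0 ?fact_neq0.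
have hg := good_scale d (good_Q t0 L).
have [M' hM'] := hg e e0.
pose m := maxn M' (t0 + L).+1.
have hm : (t0 < m)%N by rewrite /m leq_max; apply/orP; right; rewrite ltnS leq_addr.
have := hM' m (leq_maxl _ _); rewrite subr0 (bigD1 (Ordinal hm)) //=.
set rest := \sum_(i < m | _) _.
have hrest : abs rest < e.
  apply: (abs_sum_lt Hna) => // i hneq.
  case: (ltngtP i t0) => hi.
  - by rewrite Qf_lt // !mulr0 (abs0 Hna).
  - case: (leqP i (t0 + L)) => hi2.
      by rewrite Qf_mid // !mulr0 (abs0 Hna).
    rewrite Qf_big // !(absM Hna) abs_sign.
    have hb : abs (bb i) < e.
      apply: hM; first by rewrite gerDl oppr_le0.
      have : (L < i)%N by apply: leq_ltn_trans hi2; apply: leq_addl.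
      rewrite /L => hL.
      have : (N - M)%R <= `|N - M|%N%:Z by rewrite abszE ler_norm.
      have : (`|N - M|%N%:Z < i%:Z)%R by rewrite ltz_nat.
      move=> h1 h2; have h3 := le_lt_trans h2 h1.
      by rewrite lerBlDr addrC -lerBlDr ltW.
    have hd : abs d * abs ((('C(i, t0) * t0`! * ('C(i - t0.+1, L) * L`!))%:R) : K) <= 1.
      rewrite /d -(absM Hna) !natrM.
      have -> : (t0`!%:R * L`!%:R)^-1 * ('C(i, t0)%:R * t0`!%:R * ('C(i - t0.+1, L)%:R * L`!%:R))
         = ('C(i, t0) * 'C(i - t0.+1, L))%:R :> K.
        by rewrite natrM; field; rewrite !fact_neq0.
      exact: abs_natr.
    rewrite mul1r; apply: le_lt_trans hb.
    by rewrite -[X in _ <= X]mulr1 ler_wpM2l ?(abs_ge0 Hna).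
  - by exfalso; move: hneq => /eqP; apply; apply: val_inj.
move=> hS.
have hmain : abs (bb t0 * (sg t0 * (d * Qf t0 L t0))) < e.
  have -> : bb t0 * (sg t0 * (d * Qf t0 L t0)) =
    (bb t0 * (sg t0 * (d * Qf t0 L t0)) + rest) - rest by ring.
  by apply: (absB_lt Hna).
have hq : d * Qf t0 L t0 = (-1) ^+ L.
  by rewrite Qf_t0 /d; field; rewrite !fact_neq0.
move: hmain; rewrite hq !(absM Hna) abs_sign abs_expn (absN1 Hna) expr1n !mulr1.
by [].
Qed.

End Main.


Theorem proposition6p9 (p : nat) (pp : prime p) (R : realType) (K : fieldType)
  (abs : K -> R) (HK : is_Cp abs p) (N : int) (a : int -> K)
  (ha : forall eps : R, 0 < eps -> exists M : int, forall n : int,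
          n <= N -> n <= M -> abs (a n) < eps)
  (hzero : forall x : K, in_Zp abs x ->
          series_to abs (fun m : nat => a (N - m%:Z) * xm1_star abs (N - m%:Z) x) 0) :
  forall n : int, n <= N -> a n = 0.
Proof.
move=> n hn.
move: HK; rewrite /is_Cp => -[Hna _ _ hp _].
have hchar := natr_neq0 Hna pp hp.
exact: (main_sec Hna hchar hzero ha hn).
Qed.
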